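(* Let $\mathbf T$ be a countably infinite homogeneous tournament and $\mathbf T^*$ an expansion of $\mathbf T$ as in the context such that $\mathrm{Age}(\mathbf T^* )$ has the Ramsey property. Then the class $\mathrm{Age}(I_\omega[\mathbf T]^* )$ has the Ramsey property.
   Context: For relational structures $\mathbf A,\mathbf B$ in the same language, $\binom{\mathbf B}{\mathbf A}$ denotes the set of substructures of $\mathbf B$ isomorphic to $\mathbf A$. For $k\ge 1$, $\mathbf C\to(\mathbf B)^{\mathbf A}_k$ means: for every map $c:\binom{\mathbf C}{\mathbf A}\to[k]=\{0,\dots,k-1\}$ there is $\mathbf B'\in\binom{\mathbf C}{\mathbf B}$ such that $c$ is constant on $\binom{\mathbf B'}{\mathbf A}$. A class $\mathcal K$ of finite structures has the Ramsey property if for all $k\ge1$ and all $\mathbf A,\mathbf B\in\mathcal K$ there is $\mathbf C\in\mathcal K$ with $\mathbf C\to(\mathbf B)^{\mathbf A}_k$. The age $\mathrm{Age}(\mathbf F)$ of a structure $\mathbf F$ is the class of finite structures embeddable in $\mathbf F$. A tournament is a directed graph in which every pair of distinct vertices carries exactly one directed edge; it is homogeneous if every isomorphism between finite substructures extends to an automorphism. $\mathbf T=(T,E^{\mathbf T})$ is a countable homogeneous tournament, and $\mathbf T^*$ is an expansion of $\mathbf T$ to a countable relational language $L_{\mathbf T^*}\supseteq\{E,<\}$ in which $<$ is interpreted as a linear order $<^*$ on $T$. Fix a linear order $\prec$ on $\mathbb N$ with $(\mathbb N,\prec)\cong(\mathbb Q,<)$. The structure $I_\omega[\mathbf T]^*$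 has universe $\mathbb N\times T$ and language $L_{\mathbf T^*}$, interpreted as: for each $m$-ary $R\in L_{\mathbf T^*}\setminus\{<\}$ (including $E$), $R((k_1,x_1),\dots,(k_m,x_m))$ iff $k_1=\dots=k_m$ and $R^{\mathbf T^*}(x_1,\dots,x_m)$; and $(i,x)<(j,y)$ iff $i\prec j$, or $i=j$ and $x<^*y$. *)

(* Defs.v *)
From HB Require Import structures.
From mathcomp Require Import all_boot all_order all_algebra.
Set Implicit Arguments. Unset Strict Implicit. Unset Printing Implicit Defensive.

Section Structures.
Variables (L : countType) (ar : L -> nat).

(* An interpretation of the language L on a carrier A: each symbol R is
   interpreted as a predicate on tuples, represented as sequences; only
   sequences of length [ar R] are ever relevant (see [emb]). *)
Definition interp (A : Type) := forall R : L, seq A -> Prop.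

Record finstr := FinStr { fcar : finType; frel : interp fcar }.
Arguments frel : clear implicits.

Definition emb (A B : Type) (IA : interp A) (IB : interp B) (f : A -> B) :=
  injective f /\
  forall (R : L) (xs : seq A), size xs = ar R -> (IA R xs <-> IB R (map f xs)).

Definition fiso (A B : finstr) :=
  exists f : fcar A -> fcar B, bijective f /\ emb (frel A) (frel B) f.

Definition substr (C : finstr) (S : {set fcar C}) : finstr :=
  @FinStr {x : fcar C | x \in S} (fun R xs => frel C R (map val xs)).

(* C -> (B)^A_k : every k-colouring of the copies of A in C is constant on the
   copies of A inside some copy of B (colourings of all subsets restrict to
   arbitrary colourings of copies of A, as k >= 1 in all uses). *)
Definition arrows (C B A : finstr) (k : nat) :=
  forall c : {set fcar C} -> 'I_k,
  exists B' : {set fcar C},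
    fiso (substr B') B /\
    forall S1 S2 : {set fcar C}, S1 \subset B' -> S2 \subset B' ->
      fiso (substr S1) A -> fiso (substr S2) A -> c S1 = c S2.

Definition ramsey (K : finstr -> Prop) :=
  forall k : nat, 1 <= k -> forall A B : finstr, K A -> K B ->
  exists C : finstr, K C /\ arrows C B A k.

Definition age (X : Type) (IF : interp X) (A : finstr) :=
  exists f : fcar A -> X, emb (frel A) IF f.

End Structures.

Definition brel (L : countType) (X : Type) (I : interp L X) (R : L) (x y : X) :=
  I R [:: x; y].

Definition countably_infinite (T : countType) :=
  ~ exists s : seq T, forall x : T, x \in s.

Definition tournament (T : Type) (e : T -> T -> Prop) :=
  (forall x, ~ e x x) /\ (forall x y, x <> y -> (e x y <-> ~ e y x)).

Definition homogeneous_digraph (T : eqType) (e : T -> T -> Prop) :=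
  forall (s : seq T) (f : T -> T),
    {in s &, injective f} ->
    (forall x y, x \in s -> y \in s -> (e x y <-> e (f x) (f y))) ->
    exists g : T -> T, bijective g /\ (forall x y, e x y <-> e (g x) (g y)) /\
                       {in s, g =1 f}.

Definition strict_linear_order (T : Type) (r : T -> T -> Prop) :=
  (forall x, ~ r x x) /\ (forall x y z, r x y -> r y z -> r x z) /\
  (forall x y, x <> y -> r x y \/ r y x).

Definition iso_to_Q (prec : rel nat) :=
  exists h : nat -> rat, bijective h /\ forall i j, prec i j = (h i < h j)%R.

Definition Iomega (L : countType) (T : countType) (lt : L) (prec : rel nat)
  (Ts : interp L T) : interp L (nat * T) :=
  fun R xs =>
    if R == lt then
      match xs with
      | [:: a; b] => prec a.1 b.1 \/ (a.1 = b.1 /\ Ts lt [:: a.2; b.2])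
      | _ => False
      end
    else
      (forall a b, a \in xs -> b \in xs -> a.1 = b.1) /\ Ts R (map snd xs).

(* Main.v *)
Require Import Defs.
From mathcomp Require Import all_boot all_order all_algebra finmap.
From Stdlib Require Import ClassicalEpsilon Classical.
Set Implicit Arguments. Unset Strict Implicit. Unset Printing Implicit Defensive.

Lemma mychoice (A B : Type) (P : A -> B -> Prop) :
  (forall a, exists b, P a b) -> exists f : A -> B, forall a, P a (f a).
Proof.
move=> H; exists (fun a => proj1_sig (constructive_indefinite_description _ (H a))).
by move=> a; case: (constructive_indefinite_description _ _).
Qed.

Local Open Scope fset_scope.

Section Basic.
Variables (L : countType) (ar : L -> nat).

Definition sub (X : choiceType) (I : interp L X) (S : {fset X}) : finstr L :=
  @FinStr L S (fun R xs => I R (map val xs)).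

Definition lisoF (X Y : choiceType) (I : interp L X) (J : interp L Y)
  (U : {fset X}) (V : {fset Y}) (f : X -> Y) :=
  {in U &, injective f} /\ f @` U = V /\
  forall R xs, size xs = ar R -> all (mem U) xs -> (I R xs <-> J R (map f xs)).

Lemma fiso_refl A : fiso ar A A.
Proof.
exists id; split; first by exists id.
by split => // R xs _; rewrite map_id.
Qed.

Lemma fiso_sym A B : fiso ar A B -> fiso ar B A.
Proof.
case=> f [[g fK gK] [finj fR]]; exists g; split; first by exists f.
split; first exact: can_inj gK.
move=> R ys hs; have := fR R (map g ys); rewrite size_map hs => /(_ erefl).
by rewrite -map_comp (eq_map gK) map_id => h; split => /h.
Qed.

Lemma fiso_trans A B C : fiso ar A B -> fiso ar B C -> fiso ar A C.
Proof.
case=> f [fb [finj fR]] [g [gb [ginj gR]]]; exists (g \o f); split.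
  exact: bij_comp.
split; first exact: inj_comp.
move=> R xs hs; rewrite map_comp; split.
  by move/(fR R xs hs)/(gR R (map f xs)); rewrite size_map; apply.
by move=> h; apply/(fR R xs hs)/(gR R (map f xs)) => //; rewrite size_map.
Qed.

Lemma mk_fiso (A B : finstr L) (h : fcar A -> fcar B) :
  injective h -> #|fcar B| <= #|fcar A| ->
  (forall R xs, size xs = ar R -> (@Defs.frel _ A R xs <-> @Defs.frel _ B R (map h xs))) ->
  fiso ar A B.
Proof.
move=> hi hc hR; exists h; split; first exact: inj_card_bij.
by split.
Qed.

Lemma all_val (X : choiceType) (U : {fset X}) xs :
  all (mem U) xs -> exists us : seq U, xs = map val us.
Proof.
elim: xs => [|x xs IH] /=; first by exists [::].
case/andP=> hx /IH [us ->]; exists ([` hx] :: us) => //.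
Qed.

Lemma all_map_val (X : choiceType) (U : {fset X}) (us : seq U) :
  all (mem U) (map val us).
Proof. by apply/allP => x /mapP [u _ ->]; exact: valP. Qed.

Lemma liso_fiso (X Y : choiceType) (I : interp L X) (J : interp L Y) U V f :
  lisoF I J U V f -> fiso ar (sub I U) (sub J V).
Proof.
case=> fi [fU fR].
have hV : forall u : U, f (val u) \in V by move=> u; rewrite -fU in_imfset //= valP.
pose h (u : U) : V := [` hV u].
apply: (@mk_fiso (sub I U) (sub J V) h).
- move=> u1 u2 /(congr1 val) /= /fi; move=> e; apply: val_inj; apply: e; exact: valP.
- rewrite /= -!cardfE -fU; rewrite card_in_imfset //=.
- move=> R us hs /=; rewrite -map_comp /=.
  have -> : [seq val (h x) | x <- us] = map f (map val us) by rewrite -map_comp.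
  apply: fR; first by rewrite size_map. exact: all_map_val.
Qed.

Lemma fiso_liso (X Y : choiceType) (I : interp L X) (J : interp L Y) U V (y0 : Y) :
  fiso ar (sub I U) (sub J V) -> exists f, lisoF I J U V f.
Proof.
case=> g [[g' gK g'K] [gi gR]].
pose f (x : X) := if insub x is Some u then val (g u) else y0.
have fv : forall u : U, f (val u) = val (g u) by move=> u; rewrite /f valK.
exists f; split.
  move=> x1 x2 h1 h2; rewrite -[x1]/(val [` h1]) -[x2]/(val [` h2]) !fv.
  by move/val_inj/gi => ->.
split.
  apply/fsetP => y; apply/imfsetP/idP => [[x /= hx ->]|hy].
    by rewrite -[x]/(val [` hx]) fv; apply: valP.
  exists (val (g' [` hy])); first exact: valP.
  by rewrite fv g'K.
move=> R xs hs /all_val [us Exs]; rewrite Exs size_map in hs *.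
rewrite -map_comp (eq_map (f := f \o val) fv) map_comp.
by apply: (gR R us).
Qed.

Lemma emb_substr (C : finstr L) (X : choiceType) (I : interp L X) (e : fcar C -> X) (Q : {set fcar C}) :
  emb ar (@Defs.frel _ C) I e -> fiso ar (substr Q) (sub I [fset e x | x in Q]).
Proof.
case=> ei eR.
have hV : forall u : {x | x \in Q}, e (val u) \in [fset e x | x in Q].
  by move=> u; apply/imfsetP; exists (val u) => //; exact: valP.
pose h (u : {x | x \in Q}) : [fset e x | x in Q] := [` hV u].
apply: (@mk_fiso (substr Q) (sub I [fset e x | x in Q]) h).
- by move=> u1 u2 /(congr1 val) /= /ei /val_inj.
- rewrite /= -cardfE card_in_imfset /=; last by move=> x y _ _ /ei.
  rewrite card_sig -cardE; exact: leqnn.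
- move=> R us hs /=; rewrite -map_comp /=.
  have -> : [seq val (h x) | x <- us] = map e (map val us) by rewrite -map_comp.
  by apply: eR; rewrite size_map.
Qed.

End Basic.

Section LisoE.
Variables (L : countType) (ar : L -> nat).
Definition liso (X Y : choiceType) (I : interp L X) (J : interp L Y) U V :=
  exists f, lisoF ar I J U V f.

Lemma liso_symm (X Y : choiceType) (I : interp L X) (J : interp L Y) U V (x0 : X) :
  liso I J U V -> liso J I V U.
Proof. by case=> f /liso_fiso/fiso_sym; apply: fiso_liso. Qed.

Lemma liso_trans (X Y Z : choiceType) (I : interp L X) (J : interp L Y) (K : interp L Z) U V W (z0 : Z) :
  liso I J U V -> liso J K V W -> liso I K U W.
Proof.
case=> f /liso_fiso h1 [g /liso_fiso h2]; apply: (fiso_liso z0).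
exact: fiso_trans h1 h2.
Qed.

Lemma liso_refl (X : choiceType) (I : interp L X) U : liso I I U U.
Proof.
exists id; split; first by move=> x y.
split; first by apply/fsetP => x; apply/imfsetP/idP => [[y h ->]|h] //; exists x.
by move=> R xs _ _; rewrite map_id.
Qed.

Lemma lisoF_restr (X Y : choiceType) (I : interp L X) (J : interp L Y) U V f U' :
  lisoF ar I J U V f -> U' `<=` U -> lisoF ar I J U' (f @` U') f.
Proof.
case=> fi [_ fR] /fsubsetP hU; split; first by move=> x y /hU hx /hU hy; apply: fi.
split => // R xs hs hxs; apply: fR => //; apply/allP => x /(allP hxs); exact: hU.
Qed.

Lemma lisoF_sub_image (X Y : choiceType) (I : interp L X) (J : interp L Y) U V f U' :
  lisoF ar I J U V f -> U' `<=` U -> f @` U' `<=` V.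
Proof.
case=> _ [<- _] /fsubsetP h; apply/fsubsetP => y /imfsetP[x hx ->].
by apply/imfsetP; exists x => //; apply: h.
Qed.

Lemma lisoF_pull (X Y : choiceType) (I : interp L X) (J : interp L Y) U V f V' :
  lisoF ar I J U V f -> V' `<=` V ->
  exists2 U', U' `<=` U & f @` U' = V'.
Proof.
case=> fi [fU _] /fsubsetP hV; exists [fset x in U | f x \in V'].
  by apply/fsubsetP => x; rewrite inE => /andP[].
apply/fsetP => y; apply/imfsetP/idP => [[x]|hy].
  by rewrite inE => /andP[_ h] ->.
have := hV _ hy; rewrite -fU => /imfsetP[x hx e]; exists x => //.
by rewrite !inE /=; apply/andP; split => //; rewrite -e.
Qed.
End LisoE.

From mathcomp Require Import all_boot all_order all_algebra finmap.
From Stdlib Require Import ClassicalEpsilon Classical.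
Set Implicit Arguments. Unset Strict Implicit. Unset Printing Implicit Defensive.
Local Open Scope fset_scope.

Section Blocks.
Variable T : choiceType.
Definition blocks (U : {fset nat * T}) := [fset x.1 | x in U].
Definition slice (U : {fset nat * T}) p := [fset x.2 | x in U & x.1 == p].

Lemma mem_slice (U : {fset nat * T}) p y : (y \in slice U p) = ((p,y) \in U).
Proof.
apply/imfsetP/idP => [[x /andP[/= h /eqP e] ->]|h].
  by rewrite -e -surjective_pairing.
by exists (p,y) => //=; rewrite inE h eqxx.
Qed.

Lemma mem_blocks (U : {fset nat * T}) x : x \in U -> x.1 \in blocks U.
Proof. by move=> h; apply/imfsetP; exists x. Qed.

Lemma mem_sliceX (U : {fset nat * T}) x : x \in U -> x.2 \in slice U x.1.
Proof. by move=> h; rewrite mem_slice -surjective_pairing. Qed.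

Lemma blocksP (U : {fset nat * T}) p : reflect (exists y, (p, y) \in U) (p \in blocks U).
Proof.
apply: (iffP idP) => [/imfsetP[x h ->]|[y h]]; last by apply/imfsetP; exists (p,y).
by exists x.2; rewrite -surjective_pairing.
Qed.
End Blocks.

Section Omega.
Variables (L : countType) (ar : L -> nat) (E lt : L) (T : countType) (Ts : interp L T).
Hypotheses (hE : E != lt) (arE : ar E = 2) (arlt : ar lt = 2)
  (htour : tournament (brel Ts E)).

Local Notation I r := (Iomega lt r Ts).

Lemma I_lt r x y : I r lt [:: x; y] <-> r x.1 y.1 \/ (x.1 = y.1 /\ Ts lt [:: x.2; y.2]).
Proof. by rewrite /Iomega eqxx. Qed.

Lemma I_nlt r R xs : R != lt ->
  (I r R xs <-> (forall a b, a \in xs -> b \in xs -> a.1 = b.1) /\ Ts R (map snd xs)).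
Proof. by move=> h; rewrite /Iomega (negbTE h). Qed.

Lemma same_block r (x y : nat * T) : x.1 = y.1 <-> x = y \/ I r E [:: x; y] \/ I r E [:: y; x].
Proof.
have IE : forall a b : nat * T, I r E [:: a; b] <-> a.1 = b.1 /\ Ts E [:: a.2; b.2].
  move=> a b; rewrite I_nlt //; split => [[h1 h2]|[h1 h2]]; split => //.
  - by apply: h1; rewrite !inE eqxx ?orbT.
  - by move=> u v; rewrite !inE => /orP[]/eqP-> /orP[]/eqP->; rewrite ?h1.
split => [e|[->//|[/IE[]//|/IE[]//]]].
case: (eqVneq x y) => [->|nxy]; [by left|right].
have n2 : x.2 <> y.2.
  move=> e2; move/eqP: nxy; apply; rewrite [x]surjective_pairing [y]surjective_pairing e e2 //.
case: htour => _ /(_ _ _ n2) h.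
case: (classic (Ts E [:: y.2; x.2])) => hyx; first by right; apply/IE.
by left; apply/IE; split => //; apply/h.
Qed.

Lemma I_block (r : rel nat) R j ys : ~~ r j j -> size ys = ar R -> (I r R [seq (j, y) | y <- ys] <-> Ts R ys).
Proof.
move=> hr; case: (eqVneq R lt) => [->|hR].
  rewrite arlt; case: ys => [|y1 [|y2 [|]]] //= _.
  rewrite I_lt /= (negbTE hr); split => [[|[]]//|h]; last by right.
move=> _; rewrite I_nlt //; split => [[_ h]|h]; last first.
  split; first by move=> a b /mapP[? _ ->] /mapP[? _ ->].
  by rewrite -map_comp map_id.
by move: h; rewrite -map_comp map_id.
Qed.


Lemma liso_same r1 r2 U V f : lisoF ar (I r1) (I r2) U V f ->
  {in U &, forall x y, x.1 = y.1 <-> (f x).1 = (f y).1}.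
Proof.
case=> fi [_ fR] x y hx hy; rewrite (same_block r1) (same_block r2).
have hxy : all (mem U) [:: x; y] by rewrite /= hx hy.
have hyx : all (mem U) [:: y; x] by rewrite /= hx hy.
have s2 : size [:: x; y] = ar E by rewrite arE.
have s2' : size [:: y; x] = ar E by rewrite arE.
have e1 := fR E _ s2 hxy; have e2 := fR E _ s2' hyx; simpl in e1, e2.
split => [[->|[/e1|/e2]]|[/fi->|[/e1|/e2]]]; tauto.
Qed.

Lemma liso_ord r1 r2 U V f : lisoF ar (I r1) (I r2) U V f ->
  {in U &, forall x y, x.1 <> y.1 -> (r1 x.1 y.1 <-> r2 (f x).1 (f y).1)}.
Proof.
move=> hf x y hx hy nxy.
have nf : (f x).1 <> (f y).1 by move/(liso_same hf hx hy).
case: hf => _ [_ fR].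
have hxy : all (mem U) [:: x; y] by rewrite /= hx hy.
have s2 : size [:: x; y] = ar lt by rewrite arlt.
have := fR lt _ s2 hxy; rewrite /= !I_lt; tauto.
Qed.

Lemma block_iso (r1 r2 : rel nat) (U : {fset nat * T}) (rho : nat -> nat) (psi : nat -> T -> T) :
  {in blocks U &, injective rho} ->
  {in blocks U &, forall p q, r1 p q = r2 (rho p) (rho q)} ->
  (forall p, p \in blocks U -> lisoF ar Ts Ts (slice U p) (psi p @` slice U p) (psi p)) ->
  lisoF ar (I r1) (I r2) U [fset (rho x.1, psi x.1 x.2) | x in U] (fun x => (rho x.1, psi x.1 x.2)).
Proof.
move=> rhoi rhoo hpsi.
have psiI : forall x y, x \in U -> y \in U -> x.1 = y.1 -> psi x.1 x.2 = psi y.1 y.2 -> x.2 = y.2.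
  move=> x y hx hy e; rewrite -e => e2.
  have [pi _] := hpsi _ (mem_blocks hx); apply: pi e2; first exact: mem_sliceX.
  by rewrite e; exact: mem_sliceX.
split.
  move=> x y hx hy [/rhoi e1 e2].
  have e1' := e1 (mem_blocks hx) (mem_blocks hy).
  rewrite [x]surjective_pairing [y]surjective_pairing e1' (psiI x y) //.
split => // R xs hs hxs.
case: (eqVneq R lt) => [eR|hR].
  move: hs hxs; rewrite eR arlt; case: xs => [|x [|y [|]]] //= _ /and3P[hx hy _].
  rewrite !I_lt /=.
  have bx := mem_blocks hx; have by' := mem_blocks hy.
  rewrite -(rhoo _ _ bx by').
  case: (eqVneq x.1 y.1) => [e|ne].
    have [_ [_ pR]] := hpsi _ bx.
    have hs2 : size [:: x.2; y.2] = ar lt by rewrite arlt.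
    have ha : all (mem (slice U x.1)) [:: x.2; y.2].
      by rewrite /= mem_sliceX //= e mem_sliceX.
    have := pR lt _ hs2 ha; rewrite /= -e; tauto.
  have ne' : rho x.1 <> rho y.1 by move/rhoi => /(_ bx by') /eqP; rewrite (negbTE ne).
  split => [[h|[/eqP]]|[h|[]]] //; [by left | by rewrite (negbTE ne) | by left].
rewrite !I_nlt //.
have sameE : (forall a b, a \in xs -> b \in xs -> a.1 = b.1) <->
  (forall a b, a \in map (fun x => (rho x.1, psi x.1 x.2)) xs ->
               b \in map (fun x => (rho x.1, psi x.1 x.2)) xs -> a.1 = b.1).
  split => [h a b /mapP[a' ha' ->] /mapP[b' hb' ->] /=|h a b ha hb].
    by rewrite (h a' b').
  have /= := h _ _ (map_f _ ha) (map_f _ hb).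
  move/allP: hxs => hxs.
  by move/rhoi; apply; apply: mem_blocks; apply: hxs.
case: xs hs hxs sameE => [|x0 xs] hs hxs sameE; first by rewrite /=; tauto.
split => [[h1 h2]|[h1 h2]].
  have h1' := h1; move: h1'.
  have hx0 : x0 \in x0 :: xs by rewrite inE eqxx.
  move=> _; split; first by apply/sameE.
  have -> : map snd (map (fun x => (rho x.1, psi x.1 x.2)) (x0 :: xs)) =
            map (psi x0.1) (map snd (x0 :: xs)).
    rewrite -!map_comp; apply/eq_in_map => a ha /=; by rewrite (h1 a x0).
  have [_ [_ pR]] := hpsi _ (mem_blocks (allP hxs _ hx0)).
  apply/(pR _ _ _ _).1 => //; first by rewrite size_map.
  rewrite all_map; apply/allP => a ha /=; rewrite -(h1 a x0) //; apply: mem_sliceX.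
  exact: (allP hxs).
have h1' : forall a b, a \in x0 :: xs -> b \in x0 :: xs -> a.1 = b.1 by apply/sameE.
split => //.
have hx0 : x0 \in x0 :: xs by rewrite inE eqxx.
move: h2.
have -> : map snd (map (fun x => (rho x.1, psi x.1 x.2)) (x0 :: xs)) =
          map (psi x0.1) (map snd (x0 :: xs)).
  rewrite -!map_comp; apply/eq_in_map => a ha /=; by rewrite (h1' a x0).
have [_ [_ pR]] := hpsi _ (mem_blocks (allP hxs _ hx0)).
apply/(pR _ _ _ _).2 => //; first by rewrite size_map.
rewrite all_map; apply/allP => a ha /=; rewrite -(h1' a x0) //; apply: mem_sliceX.
exact: (allP hxs).
Qed.


Definition bl (U : {fset nat * T}) := sort leq (enum_fset (blocks U)).

Lemma bl_sorted U : sorted ltn (bl U).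
Proof.
by rewrite ltn_sorted_uniq_leq sort_uniq fset_uniq sort_sorted //; exact: leq_total.
Qed.

Lemma mem_bl U p : (p \in bl U) = (p \in blocks U).
Proof. by rewrite mem_sort. Qed.

Lemma sorted_map_inc (P : {fset nat}) (g : nat -> nat) :
  {in P &, forall p q, p < q -> g p < g q} ->
  map g (sort leq (enum_fset P)) = sort leq (enum_fset (g @` P)).
Proof.
move=> hg.
have s1 : sorted ltn (sort leq (enum_fset P)).
  by rewrite ltn_sorted_uniq_leq sort_uniq fset_uniq sort_sorted //; exact: leq_total.
have s2 : sorted ltn (map g (sort leq (enum_fset P))).
  apply: (homo_sorted_in (P := mem P) (e := ltn)) (s1).
    by move=> x y hx hy; apply: hg.
  by apply/allP => x; rewrite mem_sort.
apply: (@sorted_eq nat leq leq_trans anti_leq).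
- by move: s2; rewrite ltn_sorted_uniq_leq => /andP[].
- by apply: sort_sorted => x y; exact: leq_total.
apply: uniq_perm.
- by move: s2; rewrite ltn_sorted_uniq_leq => /andP[].
- by rewrite sort_uniq fset_uniq.
move=> y; rewrite mem_sort; apply/mapP/imfsetP => [[x]|[x hx ->]].
  by rewrite mem_sort => hx ->; exists x.
by exists x => //; rewrite mem_sort.
Qed.

Variable t0 : T.

Lemma decomp U V f : lisoF ar (I ltn) (I ltn) U V f ->
  size (bl V) = size (bl U) /\ forall t, t < size (bl U) ->
  lisoF ar Ts Ts (slice U (nth 0 (bl U) t)) (slice V (nth 0 (bl V) t))
        (fun y => (f (nth 0 (bl U) t, y)).2).
Proof.
move=> hf.
pose pk p := head (p, t0) [seq x <- enum_fset U | x.1 == p].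
have pkP : forall p, p \in blocks U -> pk p \in U /\ (pk p).1 = p.
  move=> p /blocksP[y hy]; rewrite /pk.
  have gen : forall s : seq (nat * T), (p, y) \in s ->
     (forall z, z \in s -> z \in U /\ z.1 = p) ->
     head (p, t0) s \in U /\ (head (p, t0) s).1 = p.
    by case => [|z zs] //= _ h; apply: h; rewrite inE eqxx.
  apply: gen; first by rewrite mem_filter eqxx /=.
  by move=> z; rewrite mem_filter => /andP[/eqP -> ->].
pose g p := (f (pk p)).1.
have gA : forall x, x \in U -> (f x).1 = g x.1.
  move=> x hx; have [h1 h2] := pkP _ (mem_blocks hx).
  by apply/(liso_same hf hx h1).
have gB : {in blocks U &, forall p q, p < q -> g p < g q}.
  move=> p q hp hq pq; have [h1 e1] := pkP _ hp; have [h2 e2] := pkP _ hq.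
  have := liso_ord hf h1 h2; rewrite e1 e2 => /(_ (elimF eqP (ltn_eqF pq))) /=.
  by move=> [+ _]; apply.
have gi : {in blocks U &, injective g}.
  move=> p q hp hq e; case: (ltngtP p q) => // pq.
    by have := gB _ _ hp hq pq; rewrite e ltnn.
  by have := gB _ _ hq hp pq; rewrite e ltnn.
have gC : g @` blocks U = blocks V.
  case: hf => _ [fU _]; apply/fsetP => q; apply/imfsetP/idP => [[p hp ->]|].
    have [h1 e1] := pkP _ hp; apply/imfsetP; exists (f (pk p)) => //.
    by rewrite -fU; apply/imfsetP; exists (pk p).
  move/imfsetP => [y]; rewrite -fU => /imfsetP[x hx ->] ->.
  by exists x.1; [exact: mem_blocks | exact: gA].
have blV : bl V = map g (bl U) by rewrite /bl -gC sorted_map_inc.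
split; first by rewrite blV size_map.
move=> t ht; set p := nth 0 (bl U) t.
have hp : p \in blocks U by rewrite -mem_bl mem_nth.
rewrite blV (nth_map 0) // -/p.
have fp : forall y, (p, y) \in U -> f (p, y) = (g p, (f (p, y)).2).
  by move=> y hy; rewrite [LHS]surjective_pairing (gA _ hy).
case: (hf) => fi [fU fR].
split.
  move=> y1 y2; rewrite !mem_slice => h1 h2 e.
  have : f (p, y1) = f (p, y2) by rewrite fp // e -fp.
  by move/fi => /(_ h1 h2) [].
split.
  apply/fsetP => z; apply/imfsetP/idP => [[y]|].
    move=> hy ->; rewrite mem_slice -fp; [rewrite -fU in_imfset //; by rewrite -mem_slice | by rewrite -mem_slice].
  rewrite mem_slice -fU => /imfsetP[x hx e].
  have ex : x.1 = p.
    apply: gi => //; first exact: mem_blocks.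
    by rewrite -gA // -e.
  exists x.2; first by rewrite mem_slice -ex -surjective_pairing.
  by rewrite -ex -surjective_pairing -e.
move=> R ys hs hys.
rewrite -(@I_block ltn R p ys) //; last by rewrite /= ltnn.
rewrite (fR R) ?size_map //; last first.
  by rewrite all_map; apply/allP => y /(allP hys) hy /=; rewrite -mem_slice.
have -> : map f [seq (p, y) | y <- ys] = [seq (g p, y) | y <- [seq (f (p, y)).2 | y <- ys]].
  rewrite -!map_comp; apply/eq_in_map => y hy /=; apply: fp.
  by have := allP hys _ hy => h; rewrite -mem_slice.
  by apply: (@I_block ltn R (g p)); [rewrite /= ltnn | rewrite size_map].
Qed.

End Omega.

From mathcomp Require Import all_boot all_order all_algebra finmap zify.
From Stdlib Require Import ClassicalEpsilon Classical Lia.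
Set Implicit Arguments. Unset Strict Implicit. Unset Printing Implicit Defensive.
Local Open Scope fset_scope.

Fixpoint tuples_of (A : Type) (s : seq A) n : seq (seq A) :=
  if n is n'.+1 then [seq x :: l | x <- s, l <- tuples_of s n'] else [:: [::]].

Lemma mem_tuples_of (A : eqType) (s : seq A) n l :
  size l = n -> all (mem s) l -> l \in tuples_of s n.
Proof.
elim: n l => [|n IH] [|x l] //= [e] /andP[hx hl].
by apply/allpairsP; exists (x, l); split => //; apply: IH.
Qed.

Lemma age_sub (L : countType) (ar : L -> nat) (X : choiceType) (I : interp L X) (S : {fset X}) :
  age ar I (sub I S).
Proof. by exists val; split; [exact: val_inj | move=> R xs _]. Qed.

Section TLevel.
Variables (L : countType) (ar : L -> nat) (T : countType) (Ts : interp L T) (t0 : T).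
Hypothesis HR : ramsey ar (age ar Ts).

Local Notation lisoT := (liso ar Ts Ts).

Lemma TR (al Y : {fset T}) k : 0 < k -> exists Z : {fset T},
  forall kap : {fset T} -> 'I_k, exists W, W `<=` Z /\ lisoT Y W /\
    forall U1 U2, U1 `<=` W -> U2 `<=` W -> lisoT al U1 -> lisoT al U2 -> kap U1 = kap U2.
Proof.
move=> k0.
have [C [[e he] hC]] := HR k0 (age_sub ar Ts al) (age_sub ar Ts Y).
exists [fset e x | x : fcar C] => kap.
have [B' [hB' hm]] := hC (fun Q => kap [fset e x | x in Q]).
exists [fset e x | x in B']; split.
  by apply/fsubsetP => y /imfsetP[x _ ->]; apply/imfsetP; exists x.
split.
  apply: (fiso_liso t0); apply: fiso_trans (fiso_sym hB') _.
  exact: emb_substr.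
have pull : forall U, U `<=` [fset e x | x in B'] ->
   exists2 Q : {set fcar C}, Q \subset B' & [fset e x | x in Q] = U.
  move=> U /fsubsetP hU; exists [set x in B' | e x \in U].
    by apply/subsetP => x; rewrite inE => /andP[].
  apply/fsetP => y; apply/imfsetP/idP => [[x]|hy].
    by rewrite inE => /andP[_ h] ->.
  have := hU _ hy => /imfsetP[x hx ey]; exists x => //.
  by rewrite inE hx -ey hy.
move=> U1 U2 h1 h2 [f1 l1] [f2 l2].
have [Q1 s1 e1] := pull _ h1; have [Q2 s2 e2] := pull _ h2.
rewrite -e1 -e2; apply: hm => //.
  apply: fiso_trans (emb_substr Q1 he) _; rewrite e1.
  exact: fiso_sym (liso_fiso l1).
apply: fiso_trans (emb_substr Q2 he) _; rewrite e2.
exact: fiso_sym (liso_fiso l2).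
Qed.

Lemma PR (als : seq {fset T}) (Y : {fset T}) k : 0 < k -> exists Z : {fset T},
  forall chi : seq {fset T} -> 'I_k, exists Ws : seq {fset T},
    [/\ size Ws = size als,
        (forall t, t < size als -> nth fset0 Ws t `<=` Z /\ lisoT Y (nth fset0 Ws t)) &
        exists c0, forall Us, size Us = size als ->
          (forall t, t < size als -> nth fset0 Us t `<=` nth fset0 Ws t /\
                                     lisoT (nth fset0 als t) (nth fset0 Us t)) ->
          chi Us = c0].
Proof.
move=> k0; elim: als => [|al als [Z' hZ']].
  exists fset0 => chi; exists [::]; split => //; exists (chi [::]).
  by case.
set n := size als.
pose dom := tuples_of (enum_fset (fpowerset Z')) n.
pose K := #|{: (size dom).-tuple 'I_k}|.
have K0 : 0 < K by rewrite /K card_tuple card_ord expn_gt0 k0.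
have [Z'' hZ''] := TR al Y K0.
exists (Z'' `|` Z') => chi.
pose kap (U : {fset T}) : 'I_K := enum_rank (map_tuple (fun Us => chi (U :: Us)) (in_tuple dom)).
have [W0 [sW0 [lW0 hW0]]] := hZ'' kap.
have kapE : forall U U' Us, kap U = kap U' -> Us \in dom -> chi (U :: Us) = chi (U' :: Us).
  move=> U U' Us /enum_rank_inj /(congr1 val) /= e hUs.
  have := congr1 (fun s => nth (chi (U :: Us)) s (index Us dom)) e.
  by rewrite /= !(nth_map Us) ?index_mem // nth_index.
case: (classic (exists U0, U0 `<=` W0 /\ lisoT al U0)) => [[U0 [sU0 lU0]]|nU0].
  have [Ws' [sz hWs' [c0 hc0]]] := hZ' (fun Us => chi (U0 :: Us)).
  exists (W0 :: Ws'); split => /=; first by rewrite sz.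
    move=> [|t] ht /=.
      by split => //; apply: fsubset_trans sW0 (fsubsetUl _ _).
    have [h1 h2] := hWs' t ht; split => //.
    by apply: fsubset_trans h1 (fsubsetUr _ _).
  exists c0 => [[|U Us]] //= [hs] hU.
  have [sU lU] := hU 0 erefl.
  rewrite (kapE U U0) ?(hW0 U U0) //.
    apply: hc0 => // t ht; exact: (hU t.+1 ht).
  apply: mem_tuples_of => //; apply/allP => V hV.
  have [t ht <-] : exists2 t, t < size Us & nth fset0 Us t = V.
    by exists (index V Us); rewrite ?index_mem ?nth_index.
  have ht1 : t.+1 < (size als).+1 by rewrite ltnS -hs.
  have ht2 : t < size als by rewrite -hs.
  have [sV _] := hU t.+1 ht1.
  have [sW _] := hWs' t ht2.
  suff h : nth fset0 Us t \in fpowerset Z' by exact: h.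
  by rewrite fpowersetE; apply: fsubset_trans sV sW.
have [Ws' [sz hWs' _]] := hZ' (fun Us => chi (fset0 :: Us)).
exists (W0 :: Ws'); split => /=; first by rewrite sz.
  move=> [|t] ht /=.
    by split => //; apply: fsubset_trans sW0 (fsubsetUl _ _).
  have [h1 h2] := hWs' t ht; split => //.
  by apply: fsubset_trans h1 (fsubsetUr _ _).
exists (Ordinal k0) => [[|U Us]] //= _ hU.
by case: nU0; exists U; apply: (hU 0 erefl).
Qed.


Lemma NH (als : seq {fset T}) k (k0 : 0 < k) (Js : seq (seq nat)) :
  (forall J, J \in Js -> size J = size als /\ uniq J) ->
  forall Y : {fset T}, exists Z : {fset T},
  forall chi : seq nat -> seq {fset T} -> 'I_k,
  exists Ws : nat -> {fset T},
   (forall j, Ws j `<=` Z /\ lisoT Y (Ws j)) /\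
   exists col : seq nat -> 'I_k, forall J, J \in Js -> forall Us, size Us = size als ->
     (forall t, t < size als -> nth fset0 Us t `<=` Ws (nth 0 J t) /\
                                lisoT (nth fset0 als t) (nth fset0 Us t)) ->
     chi J Us = col J.
Proof.
elim: Js => [|J Js IH] hJs Y.
  exists Y => chi; exists (fun _ => Y); split.
    by move=> j; split; [exact: fsubset_refl | exact: liso_refl].
  by exists (fun _ => Ordinal k0).
have [Z' hZ'] := IH (fun J0 h => hJs J0 (@mem_behead _ (J :: Js) J0 h)) Y.
have [Zp hZp] := PR als Z' k0.
exists (Zp `|` Z') => chi.
have [sJ uJ] := hJs J (mem_head _ _).
have [WsP [szP hWsP [cJ hcJ]]] := hZp (chi J).
have hiJ : forall j, j \in J -> index j J < size als by move=> j hj; rewrite -sJ index_mem.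
pose W' j := if j \in J then nth fset0 WsP (index j J) else Z'.
have W'Z : forall j, W' j `<=` Zp `|` Z'.
  move=> j; rewrite /W'; case: ifP => hj; last exact: fsubsetUr.
  have [h _] := hWsP (index j J) (hiJ j hj).
  exact: fsubset_trans h (fsubsetUl _ _).
have hphi : forall j, exists phi, lisoF ar Ts Ts Z' (W' j) phi.
  move=> j; rewrite /W'; case: ifP => hj; last exact: liso_refl.
  by have [_ h] := hWsP (index j J) (hiJ j hj).
have [phi hphi'] := mychoice hphi.
pose chi' J' Us' := chi J' (mkseq (fun t => phi (nth 0 J' t) @` nth fset0 Us' t) (size Us')).
have [Ws'' [hWs'' [col' hcol']]] := hZ' chi'.
exists (fun j => phi j @` Ws'' j); split.
  move=> j; have [s1 l1] := hWs'' j; split.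
    exact: fsubset_trans (lisoF_sub_image (hphi' j) s1) (W'Z j).
  apply: (liso_trans t0 l1); exists (phi j); exact: lisoF_restr (hphi' j) s1.
exists (fun J' => if J' == J then cJ else col' J') => J'.
case: (eqVneq J' J) => [->|ne] hJ' Us sU hU.
  apply: hcJ => // t ht; have [s l] := hU t ht; split => //.
  apply: fsubset_trans s _.
  have htJ : t < size J by rewrite sJ.
  have := lisoF_sub_image (hphi' (nth 0 J t)) (proj1 (hWs'' (nth 0 J t))).
  by rewrite /W' mem_nth // index_uniq.
have hJ'' : J' \in Js by move: hJ'; rewrite inE (negbTE ne).
have hpk : forall t, exists U'', t < size als ->
    U'' `<=` Ws'' (nth 0 J' t) /\ phi (nth 0 J' t) @` U'' = nth fset0 Us t.
  move=> t; case: (ltnP t (size als)) => ht; last by exists fset0.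
  have [s _] := hU t ht.
  have [s1 _] := hWs'' (nth 0 J' t).
  have [U'' h1 h2] := lisoF_pull (lisoF_restr (hphi' (nth 0 J' t)) s1) s.
  by exists U''.
have [pk hpk'] := mychoice hpk.
have -> : Us = mkseq (fun t => phi (nth 0 J' t) @` nth fset0 (mkseq pk (size als)) t)
                    (size (mkseq pk (size als))).
  apply: (@eq_from_nth _ fset0); first by rewrite !size_mkseq.
  move=> t; rewrite sU => ht; rewrite size_mkseq nth_mkseq // nth_mkseq //.
  by have [_ ->] := hpk' t ht.
apply: hcol' => //; first by rewrite size_mkseq.
move=> t ht; rewrite nth_mkseq //; have [s e] := hpk' t ht; split => //.
have [_ l] := hU t ht.
have [s1 _] := hWs'' (nth 0 J' t).
apply: (liso_symm t0); apply: (liso_trans t0 _ (liso_symm t0 l)).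
exists (phi (nth 0 J' t)); rewrite -e.
apply: lisoF_restr (hphi' _) _; exact: fsubset_trans s s1.
Qed.

End TLevel.

From mathcomp Require Import all_boot all_order all_algebra finmap zify.
From Stdlib Require Import ClassicalEpsilon Classical Lia.
Set Implicit Arguments. Unset Strict Implicit. Unset Printing Implicit Defensive.
Local Open Scope fset_scope.

Lemma sum_count_ord k (cs : seq 'I_k) : \sum_(c < k) count (pred1 c) cs = size cs.
Proof.
elim: cs => [|x cs IH] /=; first by rewrite big1.
rewrite big_split /= IH (bigD1 x) //= eqxx big1 ?add1n ?addn0 //.
by move=> c /negbTE; rewrite eq_sym => ->.
Qed.

Lemma pigeon k b (cs : seq 'I_k) : 0 < k -> k * b <= size cs ->
  exists c : 'I_k, b <= count (pred1 c) cs.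
Proof.
move=> k0 hs; case: (boolP [exists c : 'I_k, b <= count (pred1 c) cs]).
  by move/existsP.
rewrite negb_exists => /forallP hc.
have : size cs <= k * b.-1.
  rewrite -sum_count_ord.
  have -> : k * b.-1 = \sum_(c < k) b.-1 by rewrite sum_nat_const card_ord.
  apply: leq_sum => c _; have := hc c; rewrite -ltnNge; lia.
case: b hs hc => [|b] hs hc; first by have := hc (Ordinal k0).
move=> h; lia.
Qed.

Lemma subset_of_size (S : {fset nat}) b : b <= #|` S| ->
  exists H, H `<=` S /\ #|` H| = b.
Proof.
move=> hb; exists [fset x in take b (enum_fset S)]; split.
  apply/fsubsetP => x; rewrite inE => /mem_take; done.
rewrite card_fseq undup_id ?size_take.
  by case: ltnP => // h; apply/anti_leq; rewrite h hb.
apply: take_uniq; exact: fset_uniq.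
Qed.

Section SR.
Variable k : nat.
Hypothesis k0 : 0 < k.

Definition homog (a : nat) (col : {fset nat} -> 'I_k) (H : {fset nat}) :=
  exists c0, forall J, J `<=` H -> #|` J| = a -> col J = c0.

Definition SRP a := forall b, exists c, forall (S : {fset nat}) (col : {fset nat} -> 'I_k),
  c <= #|` S| -> exists H, H `<=` S /\ #|` H| = b /\ homog a col H.

Lemma SR0 : SRP 0.
Proof.
move=> b; exists b => S col hS; have [H [hH cH]] := subset_of_size hS.
exists H; split => //; split => //; exists (col fset0) => J _ /cardfs0_eq -> //.
Qed.

Fixpoint prehom a (col : {fset nat} -> 'I_k) (xs : seq nat) (cs : seq 'I_k) : Prop :=
  match xs, cs with
  | x :: xs', c :: cs' =>
      (forall J, J `<=` [fset y in xs'] -> #|` J| = a -> col (x |` J) = c) /\ prehom a col xs' cs'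
  | [::], [::] => True
  | _, _ => False
  end.

Lemma prehom_size a col xs cs : prehom a col xs cs -> size xs = size cs.
Proof. by elim: xs cs => [|x xs IH] [|c cs] //= [_ /IH ->]. Qed.

Lemma prehom_nth a col xs cs : prehom a col xs cs -> forall i, i < size xs ->
  forall J, J `<=` [fset y in drop i.+1 xs] -> #|` J| = a -> col (nth 0 xs i |` J) = nth (Ordinal k0) cs i.
Proof.
elim: xs cs => [|x xs IH] [|c cs] //= [h1 h2] [|i] hi J hJ cJ /=.
  by apply: h1 => //; rewrite drop0 in hJ.
by apply: (IH cs h2 i) => //.
Qed.

Lemma zf_size (xs : seq nat) (cs : seq 'I_k) c0 : size xs = size cs ->
  size [seq p.1 | p <- zip xs cs & p.2 == c0] = count (pred1 c0) cs.
Proof.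
rewrite size_map size_filter.
elim: xs cs => [|x xs IHx] [|c cs] //= [e].
by rewrite (IHx cs e) eq_sym.
Qed.

Lemma zf_subseq (xs : seq nat) (cs : seq 'I_k) c0 : size xs = size cs ->
  subseq [seq p.1 | p <- zip xs cs & p.2 == c0] xs.
Proof.
elim: xs cs => [|x xs IHx] [|c cs] //= [e].
case: (c == c0) => /=; first by rewrite eqxx; apply: IHx.
by apply: subseq_trans (IHx cs e) (subseq_cons _ _).
Qed.

Lemma SRstep a : SRP a -> SRP a.+1.
Proof.
move=> IH.
have [cA hcA] := mychoice IH.
pose d := fix d i := if i is i'.+1 then (cA (d i')).+1 else 0.
have claim : forall i (S : {fset nat}) col, d i <= #|` S| ->
  exists xs cs, [/\ size xs = i, uniq xs, {subset xs <= S} & prehom a col xs cs].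
  elim => [|i IHi] S col hS.
    by exists [::], [::].
  have : 0 < #|` S| by move: hS => /=; lia.
  rewrite cardfs_gt0 => /fset0Pn [x hx].
  have hS' : cA (d i) <= #|` S `\ x| by move: hS; rewrite (cardfsD1 x) hx /=; lia.
  have [H [hH [cH [c0 hc0]]]] := hcA (d i) (S `\ x) (fun J => col (x |` J)) hS'.
  have [xs [cs [sx ux subx px]]] := IHi H col (eq_leq (esym cH)).
  exists (x :: xs), (c0 :: cs); split => //=.
  - by rewrite sx.
  - rewrite ux andbT; apply/negP => /subx /(fsubsetP hH); by rewrite !inE eqxx.
  - by move=> y; rewrite inE => /orP[/eqP->//|/subx /(fsubsetP hH)]; rewrite !inE => /andP[].
  - split => // J hJ cJ; apply: hc0 => //; apply: fsubset_trans hJ _.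
    by apply/fsubsetP => y; rewrite inE; apply: subx.
move=> b; exists (d (k * b)) => S col hS.
have [xs [cs [sx ux subx px]]] := claim _ S col hS.
have scs := prehom_size px.
have [c0 hc0] : exists c0 : 'I_k, b <= count (pred1 c0) cs.
  by apply: pigeon => //; rewrite -scs sx.
pose sel := [seq p.1 | p <- zip xs cs & p.2 == c0].
have ssel : size sel = count (pred1 c0) cs.
  exact: zf_size.
have selP : forall y, y \in sel -> exists2 i, i < size xs & nth 0 xs i = y /\ nth (Ordinal k0) cs i = c0.
  move=> y /mapP[[y' c] /=]; rewrite mem_filter /= => /andP[/eqP -> hm] ->.
  have := hm; move/nthP => /(_ (0, c0)) [i hi e].
  exists i; first by move: hi; rewrite size_zip scs minnn -scs.
  move: e; rewrite nth_zip //=.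
  case => -> e2; split => //; rewrite (set_nth_default c0) //; by move: hi; rewrite size_zip scs minnn.
have usel : uniq sel.
  by rewrite /sel; apply: (@subseq_uniq _ _ xs) => //; apply: zf_subseq.
exists [fset y in take b sel]; split.
  apply/fsubsetP => y; rewrite inE => /mem_take /selP [i hi [<- _]].
  by apply: subx; apply: mem_nth.
split.
  rewrite card_fseq undup_id ?size_take ?ssel; last exact: take_uniq.
  by case: ltnP => //; lia.
exists c0 => J hJ cJ.
have hJx : forall y, y \in J -> exists2 i, i < size xs & nth 0 xs i = y /\ nth (Ordinal k0) cs i = c0.
  by move=> y /(fsubsetP hJ); rewrite inE => /mem_take /selP.
have hasJ : has (mem J) xs.
  have : 0 < #|` J| by rewrite cJ.
  rewrite cardfs_gt0 => /fset0Pn [y hy]; have [i hi [e _]] := hJx y hy.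
  by apply/hasP; exists y => //; rewrite -e mem_nth.
set i := find (mem J) xs.
have hi : i < size xs by rewrite -has_find.
set x := nth 0 xs i.
have xJ : x \in J by have := nth_find 0 hasJ.
have [i' hi' [ex cx]] := hJx x xJ.
have ii' : i' = i by apply/eqP; rewrite -(nth_uniq 0 hi' hi ux) ex.
rewrite -(fsetD1K xJ) /x (prehom_nth px hi (J := J `\ x)).
- by rewrite -ii' cx.
- apply/fsubsetP => y; rewrite !inE => /andP[nyx yJ].
  have [j hj [ey _]] := hJx y yJ.
  have ij : i < j.
    rewrite ltn_neqAle; apply/andP; split.
      by apply/eqP => e; move/eqP: nyx; apply; rewrite -ey -e.
    rewrite leqNgt; apply/negP => /(before_find 0).
    by rewrite ey /= yJ.
  rewrite -ey -(subnKC ij) -nth_drop; apply: mem_nth.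
  by rewrite size_drop; lia.
- by move: cJ; rewrite (cardfsD1 x) xJ /=; lia.
Qed.

Lemma SR a : SRP a.
Proof. by elim: a => [|a IH]; [exact: SR0 | exact: SRstep]. Qed.
End SR.

From mathcomp Require Import all_boot all_order all_algebra finmap zify.
From Stdlib Require Import ClassicalEpsilon Classical Lia.
Set Implicit Arguments. Unset Strict Implicit. Unset Printing Implicit Defensive.
Local Open Scope fset_scope.

Lemma emb_fiso (L : countType) (ar : L -> nat) (A : finstr L) (X : choiceType) (I : interp L X) (e : fcar A -> X) :
  emb ar (@Defs.frel _ A) I e -> fiso ar A (sub I [fset e x | x : fcar A]).
Proof.
case=> ei eR.
have hV : forall u : fcar A, e u \in [fset e x | x : fcar A] by move=> u; apply/imfsetP; exists u.
pose h (u : fcar A) : [fset e x | x : fcar A] := [` hV u].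
apply: (@mk_fiso _ ar A (sub I [fset e x | x : fcar A]) h).
- by move=> u1 u2 /(congr1 val) /= /ei.
- rewrite /= -cardfE card_in_imfset /=; last by move=> x y _ _ /ei.
  by rewrite -cardE.
- move=> R us hs /=; rewrite -map_comp /=.
  have -> : [seq val (h x) | x <- us] = map e us by [].
  exact: eR.
Qed.

Lemma nth_ltn_mono (s : seq nat) i j : sorted ltn s -> i < size s -> j < size s ->
  (nth 0 s i < nth 0 s j) = (i < j).
Proof.
move=> ss hi hj.
have mono := sorted_ltn_nth ltn_trans 0 ss.
case: (ltngtP i j) => [ij|ji|->]; last by rewrite ltnn.
  by apply: mono.
apply/negbTE; rewrite -leqNgt; apply: ltnW; exact: mono.
Qed.

Lemma setval_img (X : choiceType) (S : {fset X}) (Q : {set S}) :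
  [set x : S | val x \in [fset val y | y in Q]] = Q.
Proof.
apply/setP => x; rewrite inE; apply/imfsetP/idP => [[y hy /val_inj ->]//|hx].
by exists x.
Qed.

Section Core.
Variables (L : countType) (ar : L -> nat) (E lt : L) (T : countType) (Ts : interp L T) (t0 : T).
Hypotheses (hE : E != lt) (arE : ar E = 2) (arlt : ar lt = 2)
  (htour : tournament (brel Ts E)) (HR : ramsey ar (age ar Ts)).
Local Notation I := (Iomega lt ltn Ts).
Local Notation lisoT := (liso ar Ts Ts).

Theorem core : ramsey ar (age ar I).
Proof.
move=> k k1 A B [eA hA] [eB hB].
set SA := [fset eA x | x : fcar A]; set SB := [fset eB x | x : fcar B].
have isoA := emb_fiso hA; have isoB := emb_fiso hB; rewrite -/SA in isoA; rewrite -/SB in isoB.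
set a := size (bl SA); set b := size (bl SB).
set als := [seq slice SA p | p <- bl SA].
have sals : size als = a by rewrite size_map.
set Y := [fset x.2 | x in SB].
have [c hc] := SR k1 a b.
set Cc := [fset j in iota 0 c].
have cCc : #|` Cc| = c by rewrite card_fseq undup_id ?iota_uniq // size_iota.
set Js := [seq sort leq (enum_fset J) | J <- enum_fset (fpowerset Cc) & #|` J| == a].
have hJs : forall J, J \in Js -> size J = size als /\ uniq J.
  move=> J; rewrite /Js => /(@mapP {fset nat} (seq nat)) [J0 hJ0 ->].
  split; last by rewrite sort_uniq fset_uniq.
  by move: hJ0; rewrite mem_filter size_sort sals => /andP[/eqP].
have [Z hZ] := NH t0 HR k1 hJs Y.
set SC := Cc `*` Z.
exists (sub I SC); split; first exact: age_sub.
move=> cC.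
pose kap (U : {fset nat * T}) := cC [set x : SC | val x \in U].
pose asm (J : seq nat) (Us : seq {fset T}) :=
  [fset x in SC | (x.1 \in J) && (x.2 \in nth fset0 Us (index x.1 J))].
have [Ws [hWs [col hcol]]] := hZ (fun J Us => kap (asm J Us)).
pose colF (J : {fset nat}) := col (sort leq (enum_fset J)).
have [H [sH [cH [c0 hc0]]]] := hc Cc colF (eq_leq (esym cCc)).
set hs := sort leq (enum_fset H).
have shs : sorted ltn hs.
  by rewrite ltn_sorted_uniq_leq sort_uniq fset_uniq sort_sorted //; exact: leq_total.
have szhs : size hs = b by rewrite size_sort.
have [psi hpsi] := mychoice (fun j => proj2 (hWs j)).
set pb := bl SB.
pose rho p := nth 0 hs (index p pb).
have hib : forall p, p \in blocks SB -> index p pb < b.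
  by move=> p hp; rewrite index_mem mem_bl.
have uhs : uniq hs by rewrite sort_uniq fset_uniq.
have rhoi : {in blocks SB &, injective rho}.
  move=> p q hp hq; rewrite /rho => /eqP.
  rewrite nth_uniq ?szhs ?hib // => /eqP e.
  by rewrite -(nth_index 0 (_ : p \in pb)) ?e ?nth_index // mem_bl.
have rhoo : {in blocks SB &, forall p q, ltn p q = ltn (rho p) (rho q)}.
  move=> p q hp hq /=; rewrite /rho nth_ltn_mono ?szhs ?hib //.
  rewrite -{1}(nth_index 0 (_ : p \in pb)) ?mem_bl //.
  rewrite -{1}(nth_index 0 (_ : q \in pb)) ?mem_bl //.
  by rewrite nth_ltn_mono ?hib //; exact: bl_sorted.
have hsl : forall p, p \in blocks SB ->
    lisoF ar Ts Ts (slice SB p) (psi (rho p) @` slice SB p) (psi (rho p)).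
  move=> p hp; apply: lisoF_restr (hpsi (rho p)) _.
  apply/fsubsetP => y; rewrite mem_slice => hy.
  by apply/imfsetP; exists (p, y).
have liB := block_iso (r1 := ltn) (r2 := ltn) arlt rhoi rhoo hsl.
set W := [fset (rho x.1, psi (rho x.1) x.2) | x in SB] in liB.
have hW : forall x, x \in W -> x.1 \in H /\ x.2 \in Ws x.1.
  move=> x /imfsetP[y hy ->] /=; split.
    rewrite -(mem_sort leq) -/hs /rho mem_nth // szhs hib //; exact: mem_blocks.
  have [_ [<- _]] := hpsi (rho y.1).
  by apply/imfsetP; exists y.2 => //; apply/imfsetP; exists y.
have WSC : W `<=` SC.
  apply/fsubsetP => x /hW [h1 h2]; rewrite in_fsetM.
  apply/andP; split; first exact: (fsubsetP sH).
  by have [+ _] := hWs x.1; move/fsubsetP; apply.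
have embv : emb ar (@Defs.frel _ (sub I SC)) I val.
  by split; [exact: val_inj | move=> R xs _].
set B' := [set x : SC | val x \in W].
have imB' : [fset val x | x in B'] = W.
  apply/fsetP => y; apply/imfsetP/idP => [[x]|hy]; first by rewrite inE => h ->.
  by exists [` fsubsetP WSC _ hy]; rewrite // inE.
exists B'; split.
  apply: fiso_trans (emb_substr (C := sub I SC) B' embv) _; rewrite imB'.
  exact: fiso_trans (fiso_sym (liso_fiso liB)) (fiso_sym isoB).
suff key : forall S1 : {set fcar (sub I SC)}, S1 \subset B' -> fiso ar (substr S1) A -> cC S1 = c0.
  by move=> S1 S2 h1 h2 f1 f2; rewrite !key.
move=> S1 hS1 fS1.
set U := [fset val x | x in S1].
have -> : cC S1 = kap U by rewrite /kap setval_img.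
have UW : U `<=` W.
  apply/fsubsetP => y /imfsetP[x hx ->].
  by have := subsetP hS1 _ hx; rewrite inE.
have [f hf] : exists f, lisoF ar I I SA U f.
  apply: (fiso_liso (0, t0)).
  apply: fiso_trans (fiso_sym isoA) (fiso_trans (fiso_sym fS1) _).
  exact: (emb_substr (C := sub I SC) S1 embv).
have [szU hsl'] := decomp hE arE arlt htour t0 hf.
set J := bl U.
set Us := [seq slice U j | j <- J].
have UJ : U = asm J Us.
  apply/fsetP => x; rewrite inE; apply/idP/andP => [hx|[hx /andP[h1 h2]]].
    split; first exact: (fsubsetP (fsubset_trans UW WSC)).
    rewrite mem_bl mem_blocks //= (nth_map 0) ?index_mem ?mem_bl ?mem_blocks //.
    by rewrite nth_index ?mem_bl ?mem_blocks // mem_sliceX.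
  move: h2; rewrite (nth_map 0) ?index_mem // nth_index //.
  by rewrite mem_slice -surjective_pairing.
have bUH : blocks U `<=` H.
  apply/fsubsetP => p /imfsetP[x hx ->]; exact: (proj1 (hW x (fsubsetP UW _ hx))).
have cbU : #|` blocks U| = a by rewrite /a -szU /bl size_sort.
rewrite UJ hcol.
- by rewrite -(hc0 (blocks U)).
- rewrite /Js; apply/(@mapP {fset nat} (seq nat)); exists (blocks U) => //.
  rewrite mem_filter cbU eqxx /=.
  suff h : blocks U \in fpowerset Cc by exact: h.
  rewrite fpowersetE; apply: fsubset_trans bUH sH.
- by rewrite size_map szU sals.
move=> t ht; have ht' : t < size (bl SA) by move: ht; rewrite sals.
rewrite (nth_map 0) ?szU //; split.
  apply/fsubsetP => y; rewrite mem_slice => /(fsubsetP UW) /hW [] //.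
rewrite /als (nth_map 0) //.
by exists (fun y => (f (nth 0 (bl SA) t, y)).2); apply: hsl'.
Qed.

End Core.

From mathcomp Require Import all_boot all_order all_algebra finmap zify.
From Stdlib Require Import ClassicalEpsilon Classical Lia.
Set Implicit Arguments. Unset Strict Implicit. Unset Printing Implicit Defensive.
Import Order.TTheory GRing.Theory Num.Theory.
Local Open Scope fset_scope.

Lemma emb_liso_comp (L : countType) (ar : L -> nat) (A : finstr L) (X Y : choiceType)
  (I1 : interp L X) (I2 : interp L Y) e V g :
  emb ar (@Defs.frel _ A) I1 e -> lisoF ar I1 I2 [fset e x | x : fcar A] V g ->
  emb ar (@Defs.frel _ A) I2 (g \o e).
Proof.
case=> ei eR [gi [_ gR]].
have mI : forall x, e x \in [fset e x | x : fcar A] by move=> x; apply/imfsetP; exists x.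
split.
  move=> x y /= hxy; apply: ei; exact: gi (mI x) (mI y) hxy.
move=> R xs hs.
have hs' : size (map e xs) = ar R by rewrite size_map.
have ha : all (mem [fset e x | x : fcar A]) (map e xs) by rewrite all_map; apply/allP => x _ /=; exact: mI.
have := gR R _ hs' ha; have := eR R xs hs; rewrite map_comp /=; tauto.
Qed.

Section Transfer.
Variables (L : countType) (ar : L -> nat) (E lt : L) (T : countType) (Ts : interp L T).
Hypotheses (hE : E != lt) (arE : ar E = 2) (arlt : ar lt = 2)
  (htour : tournament (brel Ts E)).

Lemma age_tr (r1 r2 : rel nat) (A : finstr L) :
  (forall P : {fset nat}, exists rho : nat -> nat,
      {in P &, injective rho} /\ {in P &, forall p q, r1 p q = r2 (rho p) (rho q)}) ->
  age ar (Iomega lt r1 Ts) A -> age ar (Iomega lt r2 Ts) A.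
Proof.
move=> hr [e he].
set U := [fset e x | x : fcar A].
have [rho [ri ro]] := hr (blocks U).
have hid : forall p, p \in blocks U ->
    lisoF ar Ts Ts (slice U p) ((fun _ y => y) p @` slice U p) ((fun _ y => y) p).
  move=> p _; split; first by move=> x y.
  by split => // R xs _ _; rewrite map_id.
have := block_iso (r1 := r1) (r2 := r2) arlt ri ro hid.
move/(emb_liso_comp he) => h; by exists (fun x => (rho (e x).1, (e x).2)).
Qed.
End Transfer.

Theorem theorem7p3 (L : countType) (ar : L -> nat) (E lt : L)
  (T : countType) (Ts : interp L T) (prec : rel nat) :
  E != lt -> ar E = 2 -> ar lt = 2 ->
  countably_infinite T ->
  tournament (brel Ts E) ->
  homogeneous_digraph (brel Ts E) ->
  strict_linear_order (brel Ts lt) ->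
  iso_to_Q prec ->
  ramsey ar (age ar Ts) ->
  ramsey ar (age ar (Iomega lt prec Ts)).
Proof.
move=> hE arE arlt hinf htour _ _ [h [[g hK gK] hp]] HR.
have [t0 _] : exists t : T, True.
  apply: NNPP => nt; apply: hinf; exists [::] => x; case: nt; by exists x.
have C := core t0 hE arE arlt htour HR.
have toltn : forall A, age ar (Iomega lt prec Ts) A -> age ar (Iomega lt ltn Ts) A.
  move=> A; apply: (age_tr arlt) => P.
  exists (fun n => #|` [fset q in P | prec q n]|).
  have key : {in P &, forall p q, prec p q -> #|` [fset s in P | prec s p]| < #|` [fset s in P | prec s q]|}.
    move=> p q hP hQ pq; apply: fproper_ltn_card; rewrite fproperE; apply/andP; split.
      apply/fsubsetP => s; rewrite !inE => /andP[-> sp] /=.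
      by move: sp pq; rewrite !hp; apply: lt_trans.
    apply/fsubsetP => /(_ p); rewrite !inE hP pq hp ltxx /=.
    by move=> /(_ isT).
  have tot : forall p q, p != q -> prec p q || prec q p.
    move=> p q npq; rewrite !hp; case: (ltgtP (h p) (h q)) => // e.
    by move: npq; rewrite -(hK p) -(hK q) e eqxx.
  split.
    move=> p q hP hQ e; apply/eqP; apply: contraT => /tot /orP[] /key.
      by rewrite e ltnn => /(_ hP hQ).
    by rewrite e ltnn => /(_ hQ hP).
  move=> p q hP hQ /=; case: (eqVneq p q) => [->|npq].
    by rewrite ltnn hp ltxx.
  case/orP: (tot p q npq) => pq.
    by rewrite pq (key p q hP hQ pq).
  have hqp := key q p hQ hP pq.
  rewrite ltnNge (ltnW hqp) /= hp; apply/negbTE; rewrite -leNgt le_eqVlt -hp pq orbT //.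
have fromltn : forall A, age ar (Iomega lt ltn Ts) A -> age ar (Iomega lt prec Ts) A.
  move=> A; apply: (age_tr arlt) => P.
  exists (fun n => g (n%:R)%R); split.
    move=> p q _ _ /(congr1 h); rewrite !gK => /eqP; rewrite eqr_nat => /eqP.
    done.
  by move=> p q _ _ /=; rewrite hp !gK ltr_nat.
move=> k k1 A B hA hB.
have [Cc [hC hCa]] := C k k1 A B (toltn _ hA) (toltn _ hB).
by exists Cc; split => //; apply: fromltn.
Qed.
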